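(* Let $S$ and $T$ be ordered trees and let $e\colon S\to T$ be an embedding. Then there exists a rigid surjection $f\colon T\to S$ such that $e$ is the injection of $f$.
   Context: A tree is a finite, non-empty partially ordered set $(T,\sqsubseteq_T)$ with a smallest element (the root) such that the set of predecessors of each element is linearly ordered; each node counts as its own predecessor and successor. For $v,w\in T$, $v\wedge_T w$ is the $\sqsubseteq_T$-largest common predecessor of $v$ and $w$. A tree is ordered if the set of immediate successors of each node carries a fixed linear order; this induces the lexicographic linear order $\leq_T$ on $T$: $v\leq_T w$ if $v\sqsubseteq_T w$, and for $\sqsubseteq_T$-incomparable $v,w$, $v\leq_T w$ iff the immediate successor of $v\wedge_T w$ below $v$ precedes the one below $w$. A morphism $e\colon S\to T$ of ordered trees satisfies $e(v\wedge_S w)=e(v)\wedge_T e(w)$, is monotone from $\leq_S$ to $\leq_T$, and maps root to root; an embedding is an injective morphism. A function $f\colon T\to S$ is a rigid surjection if there is a morphism $e\colon S\to T$ with $f\circ e={\rm id}_S$ and $e(f(w))\sqsubseteq_T w$ for all $w\in T$; such $e$ is unique and is called the injection of $f$. *)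

(* Defs.v *)
From mathcomp Require Import all_boot.
Set Implicit Arguments. Unset Strict Implicit. Unset Printing Implicit Defensive.

Definition tree_axioms (T : finType) (le : rel T) (r : T) : Prop :=
  [/\ reflexive le, antisymmetric le, transitive le,
      (forall v, le r v) &
      (forall v x y, le x v -> le y v -> le x y || le y x)].

Definition imm_succ (T : finType) (le : rel T) (v w : T) : bool :=
  [&& le v w, v != w &
      [forall u, (le v u && le u w) ==> ((u == v) || (u == w))]].

Definition sibling_order_axioms (T : finType) (le : rel T) (sib : rel T) : Prop :=
  forall v x y z, imm_succ le v x -> imm_succ le v y -> imm_succ le v z ->
    [/\ sib x x, (sib x y -> sib y x -> x = y),
        (sib x y -> sib y z -> sib x z) & (sib x y || sib y x)].

Record otree := OTree {
  ocar :> finType;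
  ole : rel ocar;
  oroot : ocar;
  osib : rel ocar;
  otree_ax : tree_axioms ole oroot;
  osib_ax : sibling_order_axioms ole osib
}.

Section OTreeOps.
Variable T : otree.

Definition is_meet (v w m : T) : bool :=
  [&& ole m v, ole m w & [forall u, (ole u v && ole u w) ==> ole u m]].

Definition omeet (v w : T) : T :=
  if [pick m | is_meet v w m] is Some m then m else oroot T.

Definition olex (v w : T) : bool :=
  ole v w ||
  [&& ~~ ole v w, ~~ ole w v &
      [exists c, exists d,
         [&& imm_succ (@ole T) (omeet v w) c, imm_succ (@ole T) (omeet v w) d,
             ole c v, ole d w & osib c d]]].
End OTreeOps.

Definition otree_morphism (S T : otree) (e : S -> T) : Prop :=
  [/\ (forall v w, e (omeet v w) = omeet (e v) (e w)),
      (forall v w, olex v w -> olex (e v) (e w)) &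
      e (oroot S) = oroot T].

Definition otree_embedding (S T : otree) (e : S -> T) : Prop :=
  otree_morphism e /\ injective e.

Definition injection_of (S T : otree) (f : T -> S) (e : S -> T) : Prop :=
  [/\ otree_morphism e, (forall s, f (e s) = s) & (forall w, ole (e (f w)) w)].

Definition rigid_surjection (S T : otree) (f : T -> S) : Prop :=
  exists e : S -> T, injection_of f e.

(* Main.v *)
Require Import Defs.
From mathcomp Require Import all_boot.

Definition fsurj {S T : otree} (e : S -> T) (w : T) : S :=
  [arg max_(s > oroot S | ole (e s) w) #|[pred u | ole u (e s)]| ].

Lemma fsurj_spec {S T : otree} (e : S -> T) (w : T) :
  e (oroot S) = oroot T ->
  ole (e (fsurj e w)) w /\
  (forall s', ole (e s') w -> ole (e s') (e (fsurj e w))).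
Proof.
move=> er.
have [rfl asym trans rootle lin] := otree_ax T.
have P0 : ole (e (oroot S)) w by rewrite er.
rewrite /fsurj; case: arg_maxnP => // s Ps Hmax; split => // s' Ps'.
have /orP [//|hss'] := lin _ _ _ Ps' Ps.
have sub : [pred u | ole u (e s)] \subset [pred u | ole u (e s')].
  by apply/subsetP => u; rewrite !inE => hu; apply: trans hss'.
have Hc := Hmax s' Ps'.
have eqc : #|[pred u | ole u (e s)]| = #|[pred u | ole u (e s')]|.
  by apply/eqP; rewrite eqn_leq subset_leq_card.
have eqs := (subset_cardP eqc sub).
by have := eqs (e s'); rewrite !inE rfl => ->.
Qed.

Theorem lemma2p3 (S T : otree) (e : S -> T) :
  otree_embedding e ->
  exists f : T -> S, rigid_surjection f /\ injection_of f e.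
Proof.
move=> [[Hm Hl Hr] Hinj].
have [rfl asym trans rootle lin] := otree_ax T.
have inj : injection_of (fsurj e) e.
  split => //; last by move=> w; case: (fsurj_spec e w Hr).
  move=> s; apply: Hinj; have [h1 h2] := fsurj_spec e (e s) Hr.
  by apply: asym; rewrite h1 h2.
by exists (fsurj e); split => //; exists e.
Qed.
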